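(* Let $(X,d)$ be a metric space, $\lambda\ge0$, and $\ell\in\mathrm{LSC}(X)$ with $\inf_X\ell=0$. A function $u:X\to\mathbb{R}$ is a solution of $(\mathcal{G}_\lambda)$ if and only if it is a V-solution of $(\mathcal{G}_\lambda)$.
   Context: $\mathrm{LSC}(X)$ is the set of real-valued lower semicontinuous functions. Global slope: $G[u](x)=\sup_{y\neq x}\frac{(u(x)-u(y))_+}{d(x,y)}$ if $u(x)<+\infty$, $G[u](x)=+\infty$ otherwise. Pointwise notions for $(\mathcal{G}_\lambda)$: a subsolution is $u$ with $\inf_Xu=0$ and $\lambda u+G[u]\le\ell$ on $X$; a supersolution is a lower semicontinuous $v$ with $\inf_Xv=0$ and $\lambda v+G[v]\ge\ell$ on $X$; a solution is a lower semicontinuous function that is both. Viscosity notions: $u:X\to[0,+\infty)$ is a V-subsolution if $\inf_Xu=0$ and for every $x\in X$ and every $\phi:X\to\mathbb{R}$ with $\phi\ge u$, $\phi(x)=u(x)$ and $G[\phi](x)<+\infty$, one has $\lambda u(x)+G[\phi](x)\le\ell(x)$. A lower semicontinuous $v:X\to[0,+\infty)$ is a V-supersolution if $\inf_Xv=0$ and for every $x\in X$ and every $\psi:X\to\mathbb{R}$ with $\psi\le v$, $\psi(x)=v(x)$ and $G[\psi](x)<+\infty$, one has $\lambda v(x)+G[\psi](x)\ge\ell(x)$. A V-solution is a function in $\mathrm{LSC}(X)$ that is both a V-subsolution and a V-supersolution. *)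

(* Defs.v *)
From Stdlib Require Import Reals.
From Coquelicot Require Import Coquelicot.
Open Scope R_scope.

Definition is_metric {X : Type} (d : X -> X -> R) : Prop :=
  (forall x y, 0 <= d x y) /\
  (forall x y, d x y = 0 <-> x = y) /\
  (forall x y, d x y = d y x) /\
  (forall x y z, d x z <= d x y + d y z).

Definition lsc {X : Type} (d : X -> X -> R) (u : X -> R) : Prop :=
  forall x eps, 0 < eps -> exists delta, 0 < delta /\
    forall y, d x y < delta -> u x - eps < u y.

Definition inf_is_zero {X : Type} (u : X -> R) : Prop :=
  (forall x, 0 <= u x) /\ (forall eps, 0 < eps -> exists x, u x < eps).

(* Global slope G[u](x) = sup_{y <> x} (u x - u y)_+ / d(x,y) in [0,+oo]
   (u real-valued, so u x < +oo always; sup of the empty family taken as 0). *)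
Definition gslope {X : Type} (d : X -> X -> R) (u : X -> R) (x : X) : Rbar :=
  Lub_Rbar (fun r => r = 0 \/ exists y, y <> x /\ r = Rmax 0 (u x - u y) / d x y).

Definition subsol {X : Type} (d : X -> X -> R) (lam : R) (l u : X -> R) : Prop :=
  inf_is_zero u /\
  forall x, Rbar_le (Rbar_plus (lam * u x) (gslope d u x)) (l x).

Definition supersol {X : Type} (d : X -> X -> R) (lam : R) (l v : X -> R) : Prop :=
  lsc d v /\ inf_is_zero v /\
  forall x, Rbar_le (l x) (Rbar_plus (lam * v x) (gslope d v x)).

Definition solution {X : Type} (d : X -> X -> R) (lam : R) (l u : X -> R) : Prop :=
  lsc d u /\ subsol d lam l u /\ supersol d lam l u.

Definition Vsubsol {X : Type} (d : X -> X -> R) (lam : R) (l u : X -> R) : Prop :=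
  (forall x, 0 <= u x) /\ inf_is_zero u /\
  forall (x : X) (phi : X -> R),
    (forall y, u y <= phi y) -> phi x = u x -> gslope d phi x <> p_infty ->
    Rbar_le (Rbar_plus (lam * u x) (gslope d phi x)) (l x).

Definition Vsupersol {X : Type} (d : X -> X -> R) (lam : R) (l v : X -> R) : Prop :=
  lsc d v /\ (forall x, 0 <= v x) /\ inf_is_zero v /\
  forall (x : X) (psi : X -> R),
    (forall y, psi y <= v y) -> psi x = v x -> gslope d psi x <> p_infty ->
    Rbar_le (l x) (Rbar_plus (lam * v x) (gslope d psi x)).

Definition Vsolution {X : Type} (d : X -> X -> R) (lam : R) (l u : X -> R) : Prop :=
  lsc d u /\ Vsubsol d lam l u /\ Vsupersol d lam l u.

(* Main.v *)
Require Import Defs.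
From Stdlib Require Import Reals Lra.
From Coquelicot Require Import Coquelicot.
Open Scope R_scope.

Section H.
Context {X : Type} (d : X -> X -> R).

Lemma gs_ge0 g x : Rbar_le 0 (gslope d g x).
Proof.
  unfold gslope.
  destruct (Lub_Rbar_correct (fun r => r = 0 \/ exists y, y <> x /\ r = Rmax 0 (g x - g y) / d x y)) as [Hu _].
  apply Hu. now left.
Qed.

Lemma gs_ge_term g x y : y <> x -> Rbar_le (Rmax 0 (g x - g y) / d x y) (gslope d g x).
Proof.
  intros Hy. unfold gslope.
  destruct (Lub_Rbar_correct (fun r => r = 0 \/ exists y, y <> x /\ r = Rmax 0 (g x - g y) / d x y)) as [Hu _].
  apply Hu. right. exists y. auto.
Qed.

Lemma gs_le_bound g x (b : Rbar) : Rbar_le 0 b ->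
  (forall y, y <> x -> Rbar_le (Rmax 0 (g x - g y) / d x y) b) -> Rbar_le (gslope d g x) b.
Proof.
  intros H0 H. unfold gslope.
  destruct (Lub_Rbar_correct (fun r => r = 0 \/ exists y, y <> x /\ r = Rmax 0 (g x - g y) / d x y)) as [_ Hl].
  apply Hl. intros r [->|[y [Hy ->]]]; auto.
Qed.

Lemma gs_mono f g x :
  (forall y, y <> x -> Rmax 0 (f x - f y) / d x y <= Rmax 0 (g x - g y) / d x y) ->
  Rbar_le (gslope d f x) (gslope d g x).
Proof.
  intros H. apply gs_le_bound. apply gs_ge0.
  intros y Hy. eapply Rbar_le_trans. 2: apply (gs_ge_term g x y Hy).
  simpl. auto.
Qed.
End H.

Lemma dpos {X} (d : X -> X -> R) x y : is_metric d -> y <> x -> 0 < d x y.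
Proof.
  intros [H1 [H2 _]] Hy. destruct (H1 x y) as [h|h]; auto.
  exfalso. apply Hy. symmetry. apply H2. auto.
Qed.

Lemma div_mono a b c : 0 < c -> a <= b -> a / c <= b / c.
Proof. intros. unfold Rdiv. apply Rmult_le_compat_r; auto. left; apply Rinv_0_lt_compat; auto. Qed.

Lemma rbar_extract c g L : Rbar_le (Rbar_plus (Finite c) g) (Finite L) -> Rbar_le g (Finite (L - c)).
Proof. destruct g; simpl; intros; auto; lra. Qed.

Lemma rbar_back c g L : Rbar_le g (Finite (L - c)) -> Rbar_le (Rbar_plus (Finite c) g) (Finite L).
Proof. destruct g; simpl; intros; auto; lra. Qed.

Theorem theorem4p4 (X : Type) (d : X -> X -> R) (lam : R) (l : X -> R)
  (hd : is_metric d) (hlam : 0 <= lam) (hl : lsc d l) (hl0 : inf_is_zero l)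
  (u : X -> R) :
  solution d lam l u <-> Vsolution d lam l u.
Proof.
  split.
  - intros [Hlsc [[Hi Hsub] [_ [_ Hsup]]]].
    split; [auto|split; [split; [apply Hi|split; [auto|]]|split; [auto|split; [apply Hi|split;[auto|]]]]].
    + intros x phi Hphi Hx _. eapply Rbar_le_trans. 2: apply (Hsub x).
      apply Rbar_plus_le_compat. apply Rbar_le_refl.
      apply gs_mono. intros y Hy. apply div_mono. apply dpos; auto.
      apply Rle_max_compat_l. specialize (Hphi y). lra.
    + intros x psi Hpsi Hx _. eapply Rbar_le_trans. apply (Hsup x).
      apply Rbar_plus_le_compat. apply Rbar_le_refl.
      apply gs_mono. intros y Hy. apply div_mono. apply dpos; auto.
      apply Rle_max_compat_l. specialize (Hpsi y). lra.
  - intros [Hlsc [[_ [Hi Hsub]] [_ [_ [_ Hsup]]]]].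
    split; [auto|split; [split; [auto|]|split; [auto|split; [auto|]]]].
    + intros x. apply rbar_back.
      assert (Hk : forall k, 0 <= k -> Rbar_le (gslope d (fun y => Rmax (u y) (u x - k * d x y)) x) (Finite (l x - lam * u x))).
      { intros k hk. apply rbar_extract.
        assert (Hux : Rmax (u x) (u x - k * d x x) = u x).
        { destruct hd as [_ [H2 _]]. rewrite (proj2 (H2 x x) eq_refl). apply Rmax_left. lra. }
        apply (Hsub x (fun y => Rmax (u y) (u x - k * d x y))).
        - intros y. apply Rmax_l.
        - exact Hux.
        - intros Hinf.
          assert (Hb : Rbar_le (gslope d (fun y => Rmax (u y) (u x - k * d x y)) x) (Finite k)).
          { apply gs_le_bound. simpl; auto. intros y Hy. simpl. rewrite Hux.
            pose proof (dpos d x y hd Hy) as Hd.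
            apply Rmult_le_reg_r with (d x y); auto.
            unfold Rdiv. rewrite Rmult_assoc, Rinv_l by lra. rewrite Rmult_1_r.
            apply Rmax_lub. apply Rmult_le_pos; lra.
            pose proof (Rmax_r (u y) (u x - k * d x y)). lra. }
          rewrite Hinf in Hb. simpl in Hb. auto. }
      apply gs_le_bound.
      { eapply Rbar_le_trans. apply (gs_ge0 d (fun y => Rmax (u y) (u x - 0 * d x y)) x). apply (Hk 0). lra. }
      intros y Hy. pose proof (dpos d x y hd Hy) as Hd.
      set (k := Rmax 0 (u x - u y) / d x y).
      assert (hk : 0 <= k). { unfold k, Rdiv. apply Rmult_le_pos. apply Rmax_l. left; apply Rinv_0_lt_compat; auto. }
      eapply Rbar_le_trans. 2: apply (Hk k hk).
      assert (Hkd : k * d x y = Rmax 0 (u x - u y)). { unfold k. field. lra. }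
      assert (Hux : Rmax (u x) (u x - k * d x x) = u x).
      { destruct hd as [_ [H2 _]]. rewrite (proj2 (H2 x x) eq_refl). apply Rmax_left. lra. }
      assert (Huy : Rmax (u y) (u x - k * d x y) = u y).
      { apply Rmax_left. rewrite Hkd. pose proof (Rmax_r 0 (u x - u y)). lra. }
      pose proof (gs_ge_term d (fun y => Rmax (u y) (u x - k * d x y)) x y Hy) as T.
      simpl in T. rewrite Hux, Huy in T. exact T.
    + intros x. destruct (gslope d u x) eqn:E.
      * pose proof (Hsup x u ltac:(intros y; lra) eq_refl) as Hs. rewrite E in Hs. apply Hs. discriminate.
      * simpl. auto.
      * pose proof (gs_ge0 d u x) as G. rewrite E in G. simpl in G. contradiction.
Qed.
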